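(* Let $G$ be a loop-less digraph on $n$ vertices in which every vertex has in-degree at least $1$, and let $\mathring{G}$ be the digraph obtained from $G$ by adding a loop on every vertex. Then $\mathring{G}$ admits a boolean nilpotent function of class at most $4$. Moreover, if $G$ is symmetric or has a vertex of out-degree $n-1$, then $\mathring{G}$ admits a boolean nilpotent function of class at most $3$.
   Context: A digraph is symmetric if for every arc $(u,v)$, $(v,u)$ is also an arc. A boolean function on $[n]$ is a map $f:\{0,1\}^n\to\{0,1\}^n$; its (unsigned) interaction graph has an arc $(j,i)$ iff $f_i$ depends essentially on $x_j$, i.e. $f_i(a)\neq f_i(b)$ for some $a,b$ differing only in coordinate $j$ (loops included). A digraph $H$ on $[n]$ admits $f$ if the interaction graph of $f$ equals $H$. $f$ is nilpotent if $f^k$ is constant for some $k\geq 0$ ($f^0=\mathrm{id}$); the least such $k$ is its class. *)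

(* Defs.v *)
From mathcomp Require Import all_boot.
Set Implicit Arguments. Unset Strict Implicit. Unset Printing Implicit Defensive.

(* A digraph on [n] = {0,...,n-1} is a relation on 'I_n; G j i means arc (j,i). *)
Definition config (n : nat) := {ffun 'I_n -> bool}.

Definition flip n (x : config n) (j : 'I_n) : config n :=
  [ffun k => if k == j then ~~ x k else x k].

Definition bfun (n : nat) := config n -> config n.

Definition depends n (f : bfun n) (j i : 'I_n) : Prop :=
  exists a : config n, f a i != f (flip a j) i.

Definition admits n (H : rel 'I_n) (f : bfun n) : Prop :=
  forall j i : 'I_n, H j i <-> depends f j i.

Definition is_constant n (g : bfun n) : Prop :=
  exists c : config n, forall x, g x = c.

Definition nilpotent_class_le n (f : bfun n) (k : nat) : Prop :=
  exists m, m <= k /\ is_constant (iter m f).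

Definition loopless n (G : rel 'I_n) : Prop := forall v, ~~ G v v.
Definition indeg_ge1 n (G : rel 'I_n) : Prop := forall i, exists j, G j i.
Definition symmetric_digraph n (G : rel 'I_n) : Prop := forall u v, G u v -> G v u.
Definition has_full_outdeg_vertex n (G : rel 'I_n) : Prop :=
  exists v, forall u, u != v -> G v u.
Definition add_loops n (G : rel 'I_n) : rel 'I_n := fun u v => (u == v) || G u v.

(* Main.v *)
Require Import Defs.
From mathcomp Require Import all_boot.

Set Implicit Arguments. Unset Strict Implicit. Unset Printing Implicit Defensive.

Definition netf n (G : rel 'I_n) (leaf : pred 'I_n) : bfun n :=
  fun x => [ffun i => (x i == leaf i) && [forall j, G j i ==> x j]].

Lemma netf_step n (G : rel 'I_n) leaf x i :
  netf G leaf x i -> x i = leaf i /\ forall j, G j i -> x j.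
Proof.
rewrite /netf ffunE => /andP [/eqP -> /forallP H]; split=> // j Gj.
exact: (implyP (H j) Gj).
Qed.

Lemma admits_netf n (G : rel 'I_n) leaf :
  loopless G -> admits (add_loops G) (netf G leaf).
Proof.
move=> Hl j i; split.
- move=> Hji.
  pose a : config n := [ffun k => if k == i then leaf k else true].
  exists a.
  have H1 : netf G leaf a i.
    rewrite /netf ffunE /a ffunE eqxx eqxx /=.
    apply/forallP => k; apply/implyP => Gki; rewrite ffunE.
    case: eqP => // Ek; subst k. by move: (Hl i); rewrite Gki.
  rewrite H1.
  case/orP: Hji => [/eqP Eji | Gji].
  + subst j. rewrite /netf ffunE /flip ffunE eqxx /a ffunE eqxx.
    by case: (leaf i).
  + have nij : j != i.
      apply/eqP => E; subst j. by move: (Hl i); rewrite Gji.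
    rewrite /netf ffunE.
    apply/negP => /andP [_ /forallP /(_ j)]; rewrite Gji /= /flip ffunE eqxx /a ffunE.
    by rewrite (negbTE nij).
- move=> [a Ha]. rewrite /add_loops. apply/negPn/negP => /norP [nji nGji].
  move: Ha; rewrite /netf !ffunE.
  have nij : (i == j) = false by rewrite eq_sym; exact: negbTE.
  rewrite nij.
  have -> : [forall k, G k i ==> flip a j k]
            = [forall k, G k i ==> a k].
    apply: eq_forallb => k. case Gk: (G k i) => //=. rewrite /flip ffunE. case: eqP => // E; subst.
    by rewrite Gk in nGji.
  by rewrite eqxx.
Qed.

Lemma leaf_dead n (G : rel 'I_n) (leaf : pred 'I_n) (y : config n) (u c : 'I_n) :
  leaf u -> G c u -> ~~ leaf c -> netf G leaf (netf G leaf y) u = false.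
Proof.
move=> Lu Gc Lc. apply/negP => /netf_step [H1 H2].
have := H2 c Gc. move/netf_step => [Hc _].
move: H1; rewrite Lu => /netf_step [_ H3].
have := H3 c Gc. by rewrite Hc (negbTE Lc).
Qed.

Lemma dead_succ n (G : rel 'I_n) (leaf : pred 'I_n) (z : config n) (i j : 'I_n) :
  G j i -> z j = false -> netf G leaf z i = false.
Proof.
move=> Gj Hz. apply/negP => /netf_step [_ H]. by rewrite H in Hz.
Qed.

Lemma class4 n (G : rel 'I_n) (leaf : pred 'I_n) :
  (forall u, leaf u -> exists c, G c u /\ ~~ leaf c) ->
  (forall v, ~~ leaf v -> exists j, G j v /\ (leaf j \/ exists l, G l j /\ leaf l)) ->
  nilpotent_class_le (netf G leaf) 4.
Proof.
move=> H1 H2. exists 4; split => //. exists [ffun _ => false] => x.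
apply/ffunP => i. rewrite [X in _ = X]ffunE.
set f := netf G leaf.
have -> : iter 4 f x = f (f (f (f x))) by [].
case Li: (leaf i).
- have [c [Gc Lc]] := H1 i Li. exact: leaf_dead Li Gc Lc.
- have [j [Gj [Lj | [l [Gl Ll]]]]] := H2 i (negbT Li).
  + apply: (@dead_succ _ _ leaf _ _ _ Gj). have [c [Gc Lc]] := H1 j Lj. exact: leaf_dead Lj Gc Lc.
  + apply: (@dead_succ _ _ leaf _ _ _ Gj). apply: (@dead_succ _ _ leaf _ _ _ Gl).
    have [c [Gc Lc]] := H1 l Ll. exact: leaf_dead Ll Gc Lc.
Qed.

Lemma class3 n (G : rel 'I_n) (leaf : pred 'I_n) :
  (forall u, leaf u -> exists c, G c u /\ ~~ leaf c) ->
  (forall v, ~~ leaf v -> exists j, G j v /\ leaf j) ->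
  nilpotent_class_le (netf G leaf) 3.
Proof.
move=> H1 H2. exists 3; split => //. exists [ffun _ => false] => x.
apply/ffunP => i. rewrite [X in _ = X]ffunE.
set f := netf G leaf.
have -> : iter 3 f x = f (f (f x)) by [].
case Li: (leaf i).
- have [c [Gc Lc]] := H1 i Li. exact: leaf_dead Li Gc Lc.
- have [j [Gj Lj]] := H2 i (negbT Li).
  apply: (@dead_succ _ _ leaf _ _ _ Gj). have [c [Gc Lc]] := H1 j Lj. exact: leaf_dead Lj Gc Lc.
Qed.

Lemma qk n (G : rel 'I_n) : loopless G -> forall S : {set 'I_n},
  exists L : {set 'I_n},
  [/\ L \subset S, (forall a b, a \in L -> b \in L -> ~~ G a b),
   (forall u, u \in S -> u \notin L ->
      exists j, G j u /\ (j \in L \/ exists l, l \in L /\ G l j))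
  & (symmetric_digraph G -> forall u, u \in S -> u \notin L ->
      exists j, j \in L /\ G j u)].
Proof.
move=> Hl S. move: {2}#|S| (leqnn #|S|) => m.
elim: m S => [|m IH] S HS; case: (set_0Vmem S) => [-> | [v vS]].
- exists set0; split; [exact: sub0set | by move=> a b; rewrite inE | by move=> u; rewrite inE | by move=> _ u; rewrite inE].
- exfalso. move: HS; rewrite (cardsD1 v S) vS. done.
- exists set0; split; [exact: sub0set | by move=> a b; rewrite inE | by move=> u; rewrite inE | by move=> _ u; rewrite inE].
- pose S' := S :\: (v |: [set u | G v u]).
  have HS' : #|S'| <= m.
    have sub : S' \subset S :\ v.
      apply/subsetP => u; rewrite !inE => /andP [/norP [nuv _] uS].
      by rewrite nuv uS.
    have := subset_leq_card sub. move: HS; rewrite (cardsD1 v S) vS.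
    rewrite add1n ltnS => h1 h2. exact: leq_trans h2 h1.
  have [L' [subL' indL' PL' symL']] := IH S' HS'.
  have inS' u : u \in S' -> [/\ u \in S, u != v & ~~ G v u].
    by rewrite !inE => /andP [/norP [-> ->] ->].
  case: (boolP [exists l in L', G l v]) => [/existsP [l /andP [lL Glv]] | noarc].
  + exists L'; split => //.
    * apply: subset_trans subL' _. by apply/subsetP => u /inS' [].
    * move=> u uS uL. case uS': (u \in S'); first exact: PL'.
      move/negbT: uS'; rewrite !inE uS andbT negbK => /orP [/eqP -> | Gvu].
      - by exists l; split => //; left.
      - by exists v; split => //; right; exists l.
    * move=> Hs u _ _. exfalso.
      have [_ _ ] := inS' l (subsetP subL' l lL). by rewrite (Hs _ _ Glv).
  + exists (v |: L'); split.
    * apply/subsetP => u; rewrite !inE => /orP [/eqP -> // | uL].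
      by have [] := inS' u (subsetP subL' u uL).
    * move=> a b; rewrite !inE => /orP [/eqP -> | aL] /orP [/eqP -> | bL].
      - exact: Hl.
      - by have [_ _] := inS' b (subsetP subL' b bL).
      - apply/negP => Gav. move/negP: noarc; apply. apply/existsP; exists a.
        by rewrite aL Gav.
      - exact: indL'.
    * move=> u uS; rewrite !inE negb_or => /andP [nuv uL].
      case uS': (u \in S').
      - have [j [Gj [jL | [l [lL Glj]]]]] := PL' u uS' uL.
        + by exists j; split => //; left; rewrite !inE jL orbT.
        + by exists j; split => //; right; exists l; rewrite !inE lL orbT.
      - move/negbT: uS'; rewrite !inE uS andbT negbK (negbTE nuv) /= => Gvu.
        by exists v; split => //; left; rewrite !inE eqxx.
    * move=> Hs u uS; rewrite !inE negb_or => /andP [nuv uL].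
      case uS': (u \in S').
      - have [j [jL Gj]] := symL' Hs u uS' uL.
        by exists j; rewrite !inE jL orbT.
      - move/negbT: uS'; rewrite !inE uS andbT negbK (negbTE nuv) /= => Gvu.
        by exists v; rewrite !inE eqxx.
Qed.

Theorem theorem6 (n : nat) (G : rel 'I_n) :
  loopless G -> indeg_ge1 G ->
  (exists f : bfun n, admits (add_loops G) f /\ nilpotent_class_le f 4) /\
  (symmetric_digraph G \/ has_full_outdeg_vertex G ->
   exists f : bfun n, admits (add_loops G) f /\ nilpotent_class_le f 3).
Proof.
move=> Hl Hin. have [L [_ Hind HP Hsym]] := qk Hl setT.
split.
- exists (netf G (fun i => i \in L)); split; first exact: admits_netf.
  apply: class4.
  + move=> u uL. have [c Gc] := Hin u. exists c; split => //.
    apply/negP => cL. by move: (Hind c u cL uL); rewrite Gc.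
  + move=> v vL. have [j [Gj [jL | [l [lL Gl]]]]] := HP v (in_setT v) vL.
    * by exists j; split => //; left.
    * by exists j; split => //; right; exists l.
- case => [Hs | [v0 Hv0]].
  + exists (netf G (fun i => i \notin L)); split; first exact: admits_netf.
    apply: class3.
    * move=> u uL. have [j [jL Gj]] := Hsym Hs u (in_setT u) uL.
      by exists j; rewrite jL.
    * move=> v /negbNE vL. have [j Gj] := Hin v. exists j; split => //.
      apply/negP => jL. by move: (Hind j v jL vL); rewrite Gj.
  + exists (netf G (fun i => i != v0)); split; first exact: admits_netf.
    apply: class3.
    * move=> u uv. exists v0; split; [exact: Hv0 | by rewrite eqxx].
    * move=> v /negbNE /eqP ->. have [j Gj] := Hin v0. exists j; split => //.
      apply/eqP => E; subst j. by move: (Hl v0); rewrite Gj.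
Qed.
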